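(* For every generalized line graph $G$, the competition number satisfies $k(G)\le 2$.
   Context: All graphs are finite and simple. For a digraph $D$, its competition graph $C(D)$ is the graph with vertex set $V(D)$ in which two distinct vertices $u,v$ are adjacent iff there is a vertex $x$ with arcs $(u,x),(v,x)\in A(D)$. The competition number $k(G)$ of a graph $G$ is the smallest nonnegative integer $k$ such that $G$ together with $k$ new isolated vertices is the competition graph of an acyclic digraph. For a positive integer $m$, the cocktail party graph $CP(m)$ is the complete multipartite graph with $m$ parts each of size two (vertices $x_l,y_l$, $l\in\{1,\dots,m\}$; $x_i x_j$, $y_iy_j$ adjacent for $i<j$, $x_iy_j$ adjacent for $i\ne j$); $CP(1)$ is two vertices with no edge. A vertex-weighted graph $(H,f)$ is a graph $H$ with a function $f:V(H)\to\mathbb{Z}_{\ge 0}$. The generalized line graph $L(H,f)$ is obtained from the disjoint union of the line graph $L(H)$ (vertex set $E(H)$, two distinct edges adjacent iff they share an endpoint) and the graphs $Q_v:=CP(f(v))$ for each $v\in V(H)$ with $f(v)>0$, by adding all edges between every vertex of $Q_v$ and every $e\in V(L(H))$ that is incident to $v$ in $H$. A graph is a generalized line graph if it is isomorphic to $L(H,f)$ for some vertex-weighted graph $(H,f)$. *)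

(* Defs.v *)
From mathcomp Require Import all_boot.
Set Implicit Arguments. Unset Strict Implicit. Unset Printing Implicit Defensive.

Record sgraph := SGraph {
  svert :> finType;
  sadj : rel svert;
  sadj_sym : symmetric sadj;
  sadj_irr : irreflexive sadj }.

Section Digraphs.
Variable W : finType.

Definition acyclicb (D : rel W) : bool :=
  [forall x, forall y, D x y ==> ~~ connect D y x].

Definition comp_graph (D : rel W) : rel W :=
  fun u v => (u != v) && [exists x, D u x && D v x].

Definition ffrel (D : {ffun W * W -> bool}) : rel W := fun x y => D (x, y).
End Digraphs.

Definition add_isolated (T : finType) (g : rel T) (k : nat) : rel (T + 'I_k) :=
  fun a b => match a, b with inl u, inl v => g u v | _, _ => false end.
Arguments add_isolated {T} g k.

(** G together with k isolated vertices is the competition graph of an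
    acyclic digraph (arc relations encoded as finite functions, so this is
    a boolean predicate) *)
Definition comp_repr (G : sgraph) (k : nat) : bool :=
  [exists D : {ffun ((G + 'I_k) * (G + 'I_k))%type -> bool},
     acyclicb (ffrel D) &&
     [forall u, forall v, comp_graph (ffrel D) u v == add_isolated (@sadj G) k u v]].

Lemma comp_repr_exists (G : sgraph) : exists k, comp_repr G k.
Proof.
set T := (svert G).
exists #|{: (T * T)%type}|.
pose D : {ffun ((T + 'I_#|{: (T * T)%type}|) * (T + 'I_#|{: (T * T)%type}|))%type -> bool} :=
  [ffun p => match p with
             | (inl u, inr i) => let ab := enum_val i in
                 sadj ab.1 ab.2 && ((u == ab.1) || (u == ab.2))
             | _ => false end].
have Dr : forall a b, ffrel D a b -> exists u i, a = inl u /\ b = inr i.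
  by move=> [u|i] [v|j]; rewrite /ffrel ffunE // => _; exists u, j.
apply/existsP; exists D; apply/andP; split.
  apply/forallP=> x; apply/forallP=> y; apply/implyP=> /Dr [u [i [-> ->]]].
  apply/negP=> /connectP [p Hp Hl].
  case: p Hp Hl => [|z p] /=; first by [].
  by case/andP=> /Dr [u' [i' [Hi _]]].
apply/forallP=> a; apply/forallP=> b; apply/eqP.
rewrite /comp_graph /add_isolated.
case: a => [u|i]; last first.
  by case: b => [v|j]; apply/negbTE/negP=> /andP [_ /existsP [x /andP [/Dr [? [? [H _]]] _]]].
case: b => [v|j]; last first.
  by apply/negbTE/negP=> /andP [_ /existsP [x /andP [_ /Dr [? [? [H _]]]]]].
apply/idP/idP.
  case/andP=> neq /existsP [x /andP [Hu Hv]].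
  case: x Hu Hv => [w|i]; rewrite /ffrel !ffunE //=.
  idtac.
  case/andP=> Hab /orP [] /eqP Hu; case/andP=> _ /orP [] /eqP Hv.
  - by move: neq; rewrite Hu Hv eqxx.
  - by rewrite Hu Hv.
  - by rewrite Hu Hv sadj_sym.
  - by move: neq; rewrite Hu Hv eqxx.
move=> Huv; apply/andP; split.
  apply/negP=> /eqP [E]; by move: Huv; rewrite E sadj_irr.
apply/existsP; exists (inr (enum_rank (u, v))).
by rewrite /ffrel !ffunE enum_rankK /= Huv !eqxx ?orbT.
Qed.

Definition competition_number (G : sgraph) : nat :=
  ex_minn (comp_repr_exists G).

Section GenLine.
Variables (U : finType) (h : rel U) (f : U -> nat).

Definition is_edge (e : {set U}) : bool :=
  [exists u, exists v, h u v && (e == [set u; v])].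
Definition edge_t := {e : {set U} | is_edge e}.

(* vertices of Q_v = CP(f v): (v, (l, false)) is x_l, (v, (l, true)) is y_l *)
Definition cp_t := {v : U & ('I_(f v) * bool)%type}.

Definition gl_vert := (edge_t + cp_t)%type.

Definition gl_adj : rel gl_vert := fun a b =>
  match a, b with
  | inl e1, inl e2 => (e1 != e2) && ~~ [disjoint val e1 & val e2]
  | inl e, inr q | inr q, inl e => tag q \in val e
  | inr q1, inr q2 => (tag q1 == tag q2) &&
                      (nat_of_ord (tagged q1).1 != nat_of_ord (tagged q2).1)
  end.
End GenLine.
Arguments gl_adj {U} h f.

Definition isomorphic (T1 T2 : finType) (g1 : rel T1) (g2 : rel T2) : Prop :=
  exists phi : T1 -> T2, bijective phi /\ forall x y, g1 x y = g2 (phi x) (phi y).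

Definition is_gen_line_graph (G : sgraph) : Prop :=
  exists (U : finType) (h : rel U) (f : U -> nat),
    [/\ symmetric h, irreflexive h & isomorphic (@sadj G) (gl_adj h f)].

(* Main.v *)
Require Import Defs.
From mathcomp Require Import all_boot.
From mathcomp Require Import zify.
Set Implicit Arguments. Unset Strict Implicit. Unset Printing Implicit Defensive.

Section Generic.
Variables (T I : finType) (mem : I -> T -> bool) (use : I -> bool).

Implicit Types (S : {set T}) (x z y : T) (i j : I) (b : nat).

Definition alive (S : {set T}) i := use i && [forall z, mem i z ==> (z \in S)].
Definition cnt (S : {set T}) x := #|[set i | alive S i && mem i x]|.

Inductive peel : {set T} -> nat -> Prop :=
| Peel0 (S : {set T}) (b : nat) : (forall i, ~~ alive S i) -> peel S b
| PeelS (S : {set T}) (x : T) (b : nat) : x \in S -> cnt S x <= b -> peel (S :\ x) (b - cnt S x + 1) -> peel S b.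

Lemma peel_mono S b : peel S b -> forall b', b <= b' -> peel S b'.
Proof.
elim=> {S b} [S b H|S x b xS cb _ IH] b' bb'; first exact: Peel0.
apply: (PeelS xS); first exact: leq_trans bb'.
apply: IH; lia.
Qed.

Lemma alive_notin S i z : mem i z -> z \notin S -> ~~ alive S i.
Proof.
move=> mz zS; apply/negP=> /andP [_ /forallP /(_ z)]; by rewrite mz (negbTE zS).
Qed.

Lemma aliveD1 S x i : alive (S :\ x) i = alive S i && ~~ mem i x.
Proof.
rewrite /alive; case: (use i) => //=.
apply/forallP/andP.
  move=> H; split.
    apply/forallP=> z; apply/implyP=> mz; move: (H z); rewrite mz /= inE.
    by case/andP.
  by apply/negP=> mx; move: (H x); rewrite mx /= !inE eqxx.
case=> /forallP H nx z; apply/implyP=> mz; rewrite inE (implyP (H z) mz) andbT.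
rewrite inE; by apply: contraNneq nx => <-.
Qed.

Definition W := (T + 'I_2)%type.

Lemma peel_sinks S b : peel S b -> forall P : {set W}, b <= #|P| ->
  (forall y, inl y \in P -> y \notin S) ->
  exists (sg : I -> W) (rho : T -> nat),
   [/\ forall i, alive S i -> (sg i \in P) || (if sg i is inl y then y \in S else false),
       forall i j, alive S i -> alive S j -> sg i = sg j -> i = j,
       forall i z y, alive S i -> mem i z -> sg i = inl y -> y \in S -> rho z < rho y &
       forall z, z \in S -> rho z <= #|S| ].
Proof.
elim=> {S b} [S b H|S x b xS cb _ IH] P bP HP.
  exists (fun _ => inr ord0), (fun _ => 0); split.
  - by move=> i; rewrite (negbTE (H i)).
  - by move=> i j; rewrite (negbTE (H i)).
  - by move=> i z y; rewrite (negbTE (H i)).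
  - by [].
set A := [set i | alive S i && mem i x].
have cA : cnt S x = #|A| by [].
set d : W := inr ord0.
pose tau i := nth d (enum P) (index i (enum A)).
have tauP i : i \in A -> tau i \in P.
  move=> iA; rewrite -mem_enum; apply: mem_nth.
  have : index i (enum A) < size (enum A) by rewrite index_mem mem_enum.
  rewrite -!cardE -cA => h; exact: leq_trans h (leq_trans cb bP).
have tauI : {in A &, injective tau}.
  move=> i j iA jA E.
  have hi : index i (enum A) < size (enum P).
    have : index i (enum A) < size (enum A) by rewrite index_mem mem_enum.
    rewrite -!cardE -cA => h; exact: leq_trans h (leq_trans cb bP).
  have hj : index j (enum A) < size (enum P).
    have : index j (enum A) < size (enum A) by rewrite index_mem mem_enum.
    rewrite -!cardE -cA => h; exact: leq_trans h (leq_trans cb bP).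
  move/eqP: E; rewrite /tau nth_uniq ?enum_uniq // => /eqP E.
  have iA' : i \in enum A by rewrite mem_enum.
  have jA' : j \in enum A by rewrite mem_enum.
  by rewrite -(nth_index i iA') E nth_index.
set P' := (P :\: [set tau i | i in A]) :|: [set (inl x : W)].
have xP : inl x \notin P by apply/negP=> /HP; rewrite xS.
have cP' : #|P'| = #|P| - #|A| + 1.
  rewrite /P' setUC cardsU1 inE negb_and xP orbT add1n addn1; congr _.+1.
  rewrite cardsD (setIidPr _); last by apply/subsetP=> _ /imsetP [i iA ->]; exact: tauP.
  by rewrite card_in_imset.
have HP' : forall y, inl y \in P' -> y \notin S :\ x.
  move=> y; rewrite !inE => /orP [/andP [_ /HP yS]|/eqP [->]]; last by rewrite eqxx.
  by rewrite negb_and yS orbT.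
have bP' : b - cnt S x + 1 <= #|P'|.
  rewrite cP' -cA; apply: leq_add => //; exact: leq_sub2r.
have [sg [rho [H1 H2 H3 H4]]] := IH P' bP' HP'.
have aS i : alive S i -> i \notin A -> alive (S :\ x) i.
  by move=> ai; rewrite aliveD1 inE ai /= => ->.
exists (fun i => if i \in A then tau i else sg i).
exists (fun z => if z == x then #|S| else rho z).
split.
- move=> i ai; case: ifP => iA; first by rewrite tauP.
  move: (H1 i (aS i ai (negbT iA))).
  case/orP=> [|]; last by case: (sg i) => // y; rewrite inE => /andP [_ ->]; rewrite orbT.
  rewrite !inE => /orP [/andP [_ ->]//|/eqP ->]; by rewrite xS orbT.
- move=> i j ai aj; case: ifP => iA; case: ifP => jA.
  + exact: tauI.
  + move=> E; move: (H1 j (aS j aj (negbT jA))); rewrite -E.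
    have := tauP i iA; rewrite !inE => tP.
    have nimg : tau i \in [set tau i | i in A] by apply: imset_f.
    rewrite nimg /=; case/orP=> [/eqP E'|]; first by move: xP; rewrite -E' tP.
    case E2: (tau i) => [y|] // yS; move: tP; rewrite E2 => /HP; by rewrite (subsetP (subD1set S x)).
  + move=> E; move: (H1 i (aS i ai (negbT iA))); rewrite E.
    have := tauP j jA; rewrite !inE => tP.
    have nimg : tau j \in [set tau i | i in A] by apply: imset_f.
    rewrite nimg /=; case/orP=> [/eqP E'|]; first by move: xP; rewrite -E' tP.
    case E2: (tau j) => [y|] // yS; move: tP; rewrite E2 => /HP; by rewrite (subsetP (subD1set S x)).
  + by apply: H2; apply: aS => //; apply: negbT.
- move=> i z y ai mz; case: ifP => iA.
    by move=> E yS; move: (tauP i iA); rewrite E => /HP; rewrite yS.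
  have ai' := aS i ai (negbT iA).
  have zS' : z \in S :\ x by move: ai' => /andP [_ /forallP /(_ z)]; rewrite mz.
  have zx : (z == x) = false.
    by apply: negbTE; move: zS'; rewrite !inE; case/andP.
  rewrite zx => E yS; case: eqP => [yx|/eqP yx].
    have := H4 z zS'; rewrite (cardsD1 x S) xS add1n; exact.
  by apply: (H3 i z y ai' mz E); rewrite !inE yx.
- move=> z zS; case: eqP => // /eqP zx.
  have zS' : z \in S :\ x by rewrite in_setD1 zx zS.
  exact: leq_trans (H4 z zS') (subset_leq_card (subD1set S x)).
Qed.
End Generic.
Section Repr.
Variables (T I : finType) (mem : I -> T -> bool) (use : I -> bool) (g : rel T).
Hypothesis Hirr : irreflexive g.
Hypothesis Hcl : forall i u v, use i -> mem i u -> mem i v -> u != v -> g u v.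
Hypothesis Hcov : forall u v, g u v -> exists i, [&& use i, mem i u & mem i v].

Lemma connect_rank (W' : finType) (D : rel W') (r : W' -> nat) :
  (forall a c, D a c -> r a < r c) -> forall a c, connect D a c -> r a <= r c.
Proof.
move=> Hr a c /connectP [p Hp ->]; elim: p a Hp => [|z p IH] a //= /andP [Daz Hp].
exact: leq_trans (ltnW (Hr _ _ Daz)) (IH _ Hp).
Qed.

Lemma repr_of_peel : peel mem use [set: T] 2 ->
  exists D : rel (T + 'I_2), acyclicb D &&
    [forall u, forall v, comp_graph D u v == add_isolated g 2 u v].
Proof.
move=> Hp.
pose P : {set T + 'I_2} := [set inr i | i : 'I_2].
have cP : #|P| = 2.
  rewrite card_imset ?card_ord //; by move=> i j [].
have HP : forall y, inl y \in P -> y \notin [set: T].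
  by move=> y /imsetP [i _].
have [sg [rho [H1 H2 H3 H4]]] := peel_sinks Hp (eq_leq (esym cP)) HP.
have alT i : alive mem use [set: T] i = use i.
  rewrite /alive; case: (use i) => //=; apply/forallP=> z; by rewrite in_setT implybT.
pose mem' i (a : T + 'I_2) := if a is inl z then mem i z else false.
pose D : rel (T + 'I_2) := fun a c => [exists i, [&& use i, mem' i a & sg i == c]].
pose r (a : T + 'I_2) := if a is inl z then rho z else #|T|.+1.
have Hr : forall a c, D a c -> r a < r c.
  move=> [z|j] c /existsP [i /and3P [ui /= mz /eqP E]] //.
  case: c E => [y|k] E /=.
    by apply: (H3 i z y); rewrite ?alT ?in_setT.
  by rewrite ltnS -cardsT; apply: H4; rewrite in_setT.
exists D; apply/andP; split.
  apply/forallP=> x; apply/forallP=> y; apply/implyP=> Dxy; apply/negP=> Cyx.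
  have := connect_rank Hr Cyx; have := Hr _ _ Dxy; lia.
apply/forallP=> u; apply/forallP=> v; apply/eqP.
rewrite /comp_graph /add_isolated.
case: u => [a|j]; last first.
  apply/negbTE/negP=> /andP [_ /existsP [w /andP [/existsP [i /and3P [_ //]] _]]].
case: v => [b|k]; last first.
  apply/negbTE/negP=> /andP [_ /existsP [w /andP [_ /existsP [i /and3P [_ //]]]]].
apply/idP/idP.
  case/andP=> neq /existsP [w /andP [/existsP [i /and3P [ui mi /eqP Ei]] /existsP [j /and3P [uj mj /eqP Ej]]]].
  have ij : i = j by apply: H2; rewrite ?alT // Ei Ej.
  subst j; apply: (Hcl ui mi mj); by apply: contra neq => /eqP ->.
move=> gab; apply/andP; split.
  by apply/negP => /eqP [E]; move: gab; rewrite E Hirr.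
have [i /and3P [ui ma mb]] := Hcov gab.
apply/existsP; exists (sg i); apply/andP; split; apply/existsP; exists i; by rewrite ui /= ?ma ?mb eqxx.
Qed.
End Repr.
Lemma transfer (G : sgraph) (T : finType) (g : rel T) (phi : G -> T) :
  bijective phi -> (forall x y, sadj x y = g (phi x) (phi y)) ->
  (exists D : rel (T + 'I_2), acyclicb D &&
    [forall u, forall v, comp_graph D u v == add_isolated g 2 u v]) ->
  comp_repr G 2.
Proof.
move=> [psi phiK psiK] Hg [D /andP [Dac /forallP Dc]].
pose mp (a : G + 'I_2) : T + 'I_2 := match a with inl x => inl (phi x) | inr i => inr i end.
pose pm (a : T + 'I_2) : G + 'I_2 := match a with inl x => inl (psi x) | inr i => inr i end.
have mpK : cancel mp pm by case=> [x|i] //=; rewrite phiK.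
have pmK : cancel pm mp by case=> [x|i] //=; rewrite psiK.
pose D' := [ffun p : (G + 'I_2) * (G + 'I_2) => D (mp p.1) (mp p.2)].
have D'E a b : ffrel D' a b = D (mp a) (mp b) by rewrite /ffrel ffunE.
apply/existsP; exists D'; apply/andP; split.
  apply/forallP=> x; apply/forallP=> y; apply/implyP=> Dxy; apply/negP=> /connectP [p Hp Hl].
  move: Dac => /forallP /(_ (mp x)) /forallP /(_ (mp y)) /implyP.
  rewrite -D'E => /(_ Dxy) /negP; apply; apply/connectP; exists (map mp p).
    elim: p y Hp {Hl Dxy} => [|z p IH] y //= /andP [Hyz Hp].
    by rewrite -D'E Hyz IH.
  by rewrite last_map -Hl.
apply/forallP=> u; apply/forallP=> v.
have E1 : comp_graph (ffrel D') u v = comp_graph D (mp u) (mp v).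
  rewrite /comp_graph (inj_eq (can_inj mpK)); congr (_ && _).
  apply/existsP/existsP=> [[w]|[w]]; first by exists (mp w); rewrite -!D'E.
  by exists (pm w); rewrite !D'E pmK.
rewrite E1; move: (Dc (mp u)) => /forallP /(_ (mp v)) /eqP ->.
by clear E1; case: u => [x|i]; case: v => [y|j] //=; rewrite Hg.
Qed.

Lemma cn_le2 (G : sgraph) : comp_repr G 2 -> competition_number G <= 2.
Proof.
rewrite /competition_number => H.
by case: ex_minnP => m _ /(_ 2 H).
Qed.
Section GL.
Variables (U : finType) (h : rel U) (f : U -> nat).
Notation T := (gl_vert h f).
Definition CI := (cp_t f + (U * option bool))%type.
Definition qidx (q : cp_t f) : nat := (tagged q).1.
Definition qb (q : cp_t f) : bool := (tagged q).2.
Definition deg (v : U) := #|[set e : edge_t h | v \in val e]|.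

Definition cmem (i : CI) (a : T) : bool :=
 match i, a with
 | inl q, inl e => tag q \in val e
 | inl q, inr q' => (tag q' == tag q) && ((qidx q' == qidx q) == ~~ qb q')
 | inr (v, _), inl e => v \in val e
 | inr (v, Some bb), inr q' => (tag q' == v) && (qb q' == bb)
 | inr (v, None), inr _ => false
 end.

Definition cuse (i : CI) : bool :=
 match i with
 | inl q => ~~ qb q
 | inr (v, Some false) => 1 < f v
 | inr (v, Some true) => 0 < f v
 | inr (v, None) => (f v == 0) && (1 < deg v)
 end.

Lemma cp_eq (q1 q2 : cp_t f) : tag q1 = tag q2 -> qidx q1 = qidx q2 -> qb q1 = qb q2 -> q1 = q2.
Proof.
case: q1 => v1 [l1 b1]; case: q2 => v2 [l2 b2]; rewrite /qidx /qb /= => E; subst v2.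
by move=> /val_inj -> ->.
Qed.

Lemma qidx_lt (q : cp_t f) : qidx q < f (tag q).
Proof. by case: q => v [l b]; rewrite /qidx /=. Qed.

Lemma gl_irr : irreflexive (gl_adj h f).
Proof. move=> [e|q]; rewrite /gl_adj /=; by rewrite !eqxx. Qed.

Lemma common_adj (e1 e2 : edge_t h) v : v \in val e1 -> v \in val e2 -> e1 != e2 ->
  gl_adj h f (inl e1) (inl e2).
Proof.
move=> v1 v2 ne /=; rewrite ne /=; apply/negP=> Dj; move: (disjointFr Dj v1); by rewrite v2.
Qed.

Lemma gl_cl i u v : cuse i -> cmem i u -> cmem i v -> u != v -> gl_adj h f u v.
Proof.
case: i => [q|[w [bb|]]] /=.
- move=> nb; case: u => [e1|q1]; case: v => [e2|q2] //=.
  + move=> m1 m2 ne; apply: (common_adj m1 m2); by apply: contra ne => /eqP ->.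
  + by move=> m1 /andP [/eqP -> _].
  + by move=> /andP [/eqP -> _].
  + move=> /andP [/eqP t1 i1] /andP [/eqP t2 i2] ne; apply/andP; split; first by rewrite t1 t2.
    apply/negP=> /eqP ei.
    have e12 : qidx q1 = qidx q2 := ei.
    have b12 : qb q1 = qb q2.
      move: i1 i2; rewrite e12; case: (qidx q2 == qidx q); case: (qb q1); by case: (qb q2).
    by move: ne; rewrite (cp_eq (etrans t1 (esym t2)) e12 b12) eqxx.
- move=> _; case: u => [e1|q1]; case: v => [e2|q2] //=.
  + move=> m1 m2 ne; apply: (common_adj m1 m2); by apply: contra ne => /eqP ->.
  + by move=> m1 /andP [/eqP -> _].
  + by move=> /andP [/eqP -> _].
  + move=> /andP [/eqP t1 /eqP b1] /andP [/eqP t2 /eqP b2] ne; apply/andP; split; first by rewrite t1 t2.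
    apply/negP=> /eqP ei.
    have e12 : qidx q1 = qidx q2 := ei.
    by move: ne; rewrite (cp_eq (etrans t1 (esym t2)) e12 (etrans b1 (esym b2))) eqxx.
- move=> _; case: u => [e1|q1]; case: v => [e2|q2] //=.
  move=> m1 m2 ne; apply: (common_adj m1 m2); by apply: contra ne => /eqP ->.
Qed.
Lemma deg2 (e1 e2 : edge_t h) w : w \in val e1 -> w \in val e2 -> e1 != e2 -> 1 < deg w.
Proof.
move=> w1 w2 ne; rewrite /deg; apply: leq_trans (subset_leq_card (_ : [set e1; e2] \subset _)).
  by rewrite cards2 ne.
by apply/subsetP=> e; rewrite !inE => /orP [] /eqP ->.
Qed.

Lemma gl_cov u v : gl_adj h f u v -> exists i, [&& cuse i, cmem i u & cmem i v].
Proof.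
case: u => [e1|q1]; case: v => [e2|q2]; rewrite /gl_adj /=.
- case/andP=> ne /pred0Pn [w /andP [w1 w2]].
  have {}w1 : w \in val e1 := w1. have {}w2 : w \in val e2 := w2.
  case: (boolP (f w == 0)) => fw.
    exists (inr (w, None)); by rewrite /= fw w1 w2 (deg2 w1 w2 ne).
  exists (inr (w, Some true)); by rewrite /= lt0n fw w1 w2.
- move=> t; case: (boolP (qb q2)) => b.
    exists (inr (tag q2, Some true)); rewrite /= t b !eqxx /= ?andbT.
    exact: leq_ltn_trans (leq0n _) (qidx_lt q2).
  by exists (inl q2); rewrite /= t b !eqxx.
- move=> t; case: (boolP (qb q1)) => b.
    exists (inr (tag q1, Some true)); rewrite /= t b !eqxx /= ?andbT.
    exact: leq_ltn_trans (leq0n _) (qidx_lt q1).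
  by exists (inl q1); rewrite /= t b !eqxx.
- case/andP=> /eqP t ne.
  have ne' : qidx q1 != qidx q2 := ne.
  case: (boolP (qb q1)) => b1; case: (boolP (qb q2)) => b2.
  + exists (inr (tag q1, Some true)); rewrite /= t b1 b2 !eqxx /= ?andbT.
    exact: leq_ltn_trans (leq0n _) (qidx_lt q2).
  + exists (inl q2); rewrite /= t b1 b2 !eqxx /=; by rewrite (negbTE ne').
  + exists (inl q1); rewrite /= t b1 b2 !eqxx /=; by rewrite [qidx q2 == _]eq_sym (negbTE ne').
  + exists (inr (tag q1, Some false)); rewrite /= t (negbTE b1) (negbTE b2) !eqxx /= andbT.
    have := qidx_lt q1; have := qidx_lt q2; rewrite t; move: ne'; lia.
Qed.

Implicit Types (S : {set T}) (i : CI) (e : edge_t h) (v w : U).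
Definition isE (a : T) := if a is inl _ then true else false.
Notation alv := (alive cmem cuse).
Notation cnt' := (cnt cmem cuse).
Definition aliveK (S : {set T}) v := alv S (inr (v, None)).
Definition Dd (S : {set T}) := [set v | cuse (inr (v, None)) && ~~ aliveK S v].
Definition remE (S : {set T}) := #|[set e : edge_t h | inl e \notin S]|.

Lemma alive_mem S i z : alv S i -> cmem i z -> z \in S.
Proof. by case/andP=> _ /forallP /(_ z) /implyP. Qed.

Lemma alive_sub S S' i : S' \subset S -> alv S' i -> alv S i.
Proof.
move=> sub /andP [u /forallP H]; rewrite /alive u /=; apply/forallP=> z.
by apply/implyP=> mz; apply: (subsetP sub); exact: (implyP (H z)).
Qed.

Lemma ph2_alive S i : (forall a, a \in S -> isE a) -> alv S i -> exists v, i = inr (v, None).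
Proof.
move=> HS; case: i => [q|[v [bb|]]] ai; move: (ai) => /andP [ui _]; last by exists v.
  move: ui; rewrite /= => nb.
  have : cmem (inl q) (inr q) by rewrite /= !eqxx nb.
  by move=> /(alive_mem ai) /HS.
have f0 : 0 < f v by move: ui; case: (bb) => /= H //; apply: ltnW.
pose q : cp_t f := existT _ v (Ordinal f0, bb).
have : cmem (inr (v, Some bb)) (inr q) by rewrite /= !eqxx.
by move=> /(alive_mem ai) /HS.
Qed.

Lemma edge_card (e : edge_t h) : #|val e| <= 2.
Proof. by case: e => s /= /existsP [u /existsP [w /andP [_ /eqP ->]]]; rewrite cards2; case: (_ != _). Qed.

Lemma cnt_edge S e : (forall a, a \in S -> isE a) ->
  cnt' S (inl e) <= #|[set v | (v \in val e) && aliveK S v]|.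
Proof.
move=> HS; rewrite /cnt.
apply: leq_trans (leq_imset_card (fun v => (inr (v, None) : CI)) _).
apply: subset_leq_card; apply/subsetP=> i; rewrite inE => /andP [ai mi].
have [v Ei] := ph2_alive HS ai; subst i.
by apply/imsetP; exists v => //; rewrite inE; apply/andP; split.
Qed.

Lemma remE_D1 S e : inl e \in S -> remE (S :\ inl e) = (remE S).+1.
Proof.
move=> eS; rewrite /remE.
have -> : [set e' : edge_t h | inl e' \notin S :\ inl e] = e |: [set e' | inl e' \notin S].
  apply/setP=> e'; rewrite !inE; case: (eqVneq e' e) => [->|ne] /=; first by rewrite eqxx.
  have ne' : (inl e' != inl e :> T) by apply: contra ne => /eqP [->].
  by rewrite ne'.
by rewrite cardsU1 inE eS.
Qed.

Lemma deadK_D1 S e : inl e \in S ->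
  #|Dd S| + #|[set v | (v \in val e) && aliveK S v]| <= #|Dd (S :\ inl e)|.
Proof.
move=> eS.
have disj : Dd S :&: [set v | (v \in val e) && aliveK S v] = set0.
  apply/setP=> v; rewrite !inE; by case: (aliveK S v); rewrite /= ?andbF ?andbT.
have := cardsU (Dd S) [set v | (v \in val e) && aliveK S v]; rewrite disj cards0 subn0 => <-.
apply: subset_leq_card; apply/subsetP=> v; rewrite !inE => /orP [/andP [u na]|/andP [ve av]].
  rewrite u /=; apply: contra na; apply: alive_sub; exact: subD1set.
have u : cuse (inr (v, None)) by case/andP: av.
rewrite u /=; apply: (@alive_notin _ _ cmem cuse _ _ (inl e)) => //.
by rewrite !inE eqxx.
Qed.

Lemma stuck_count S : (forall e, inl e \in S -> forall w, w \in val e -> aliveK S w) ->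
  #|Dd S| <= remE S.
Proof.
move=> Hst.
have H1 : forall v, v \in Dd S -> 1 < deg v.
  by move=> v; rewrite inE => /andP [/andP [_ ->]].
have H2 : forall v e, v \in Dd S -> v \in val e -> inl e \notin S.
  move=> v e; rewrite inE => /andP [_ na] ve; apply/negP=> eS.
  by move: na; rewrite (Hst e eS v ve).
suff : (#|Dd S| * 2 <= remE S * 2) by rewrite leq_mul2r.
rewrite -sum_nat_const.
apply: leq_trans (_ : \sum_(v in Dd S) deg v <= _).
  by apply: leq_sum => v /H1.
have -> : \sum_(v in Dd S) deg v = \sum_(v in Dd S) \sum_(e : edge_t h | v \in val e) 1.
  by apply: eq_bigr => v _; rewrite /deg -sum1_card; apply: eq_bigl => e; rewrite inE.
rewrite (exchange_big_dep (fun e : edge_t h => inl e \notin S)); last first.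
  by move=> v e vD ve; apply: H2 vD ve.
rewrite /remE -sum_nat_const big_mkcond [X in _ <= X]big_mkcond /=; apply: leq_sum => e _.
rewrite inE; case: ifP => // _; rewrite sum1_card.
apply: leq_trans (edge_card e); apply: subset_leq_card; apply/subsetP=> v; rewrite ?inE /=.
by case/andP.
Qed.

Lemma ar2 (r b c d1 nv d2 : nat) : 2 + r <= b + d1 -> c <= b -> c <= nv -> d1 + nv <= d2 ->
  2 + r.+1 <= b - c + 1 + d2.
Proof. lia. Qed.

Lemma phase2_step S b : (forall a, a \in S -> isE a) -> 0 < b -> 2 + remE S <= b + #|Dd S| ->
  forall i, alv S i ->
  exists e, inl e \in S /\ #|[set v | (v \in val e) && aliveK S v]| <= b.
Proof.
move=> HS b0 Hinv i ai.
case: (boolP [exists e, (inl e \in S) && [exists w, (w \in val e) && ~~ aliveK S w]]).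
  move/existsP => [e /andP [eS /existsP [w /andP [we nw]]]]; exists e; split=> //.
  apply: leq_trans b0; apply: leq_trans (_ : #|val e :\ w| <= 1).
    apply: subset_leq_card; apply/subsetP=> v; rewrite !inE => /andP [ve av].
    rewrite ve andbT; by apply: contra nw => /eqP <-.
  have := edge_card e; rewrite (cardsD1 w) we; by case: #|_|.
move=> nst.
have Hst : forall e, inl e \in S -> forall w, w \in val e -> aliveK S w.
  move=> e eS w we; apply: contraNT nst => nw; apply/existsP; exists e; rewrite eS /=.
  by apply/existsP; exists w; rewrite we.
have := stuck_count Hst => Hc.
have [v Ei] := ph2_alive HS ai; subst i.
have : 0 < deg v by case/andP: ai => /andP [_ /ltnW].
case/card_gt0P=> e0; rewrite inE => ve0.
exists e0; split; first by apply: (alive_mem ai).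
apply: leq_trans (_ : #|val e0| <= b); last first.
  apply: leq_trans (edge_card e0) _; move: Hinv Hc; rewrite /remE.
  move: #|_| #|_| => x y; lia.
by apply: subset_leq_card; apply/subsetP=> w; rewrite inE => /andP [].
Qed.

Lemma phase2 n : forall S b, #|S| <= n -> (forall a, a \in S -> isE a) -> 0 < b ->
  2 + remE S <= b + #|Dd S| -> peel cmem cuse S b.
Proof.
elim: n => [|n IH] S b cS HS b0 Hinv.
  apply: Peel0 => i; apply/negP=> ai.
  have [e [eS _]] := phase2_step HS b0 Hinv ai.
  by move: cS; rewrite (cardsD1 (inl e)) eS.
case: (pickP (alv S)) => [i ai|none]; last by apply: Peel0 => i; rewrite none.
have [e [eS nvb]] := phase2_step HS b0 Hinv ai.
have cb := leq_trans (cnt_edge e HS) nvb.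
apply: (PeelS eS cb); apply: IH.
- by move: cS; rewrite (cardsD1 (inl e)) eS.
- by move=> a; rewrite inE => /andP [_ /HS].
- by rewrite addn1.
- rewrite (remE_D1 eS).
  exact: ar2 Hinv cb (cnt_edge e HS) (deadK_D1 eS).
Qed.

Lemma eq_cp (q1 q2 : cp_t f) :
  (q1 == q2) = [&& tag q1 == tag q2, qidx q1 == qidx q2 & qb q1 == qb q2].
Proof.
apply/eqP/and3P=> [->|[/eqP a /eqP b /eqP c]]; first by rewrite !eqxx.
exact: cp_eq.
Qed.

Definition Qs v t t' : {set T} := [set a : T | if a is inr q then
  (tag q == v) && (if qb q then qidx q < t' else qidx q < t) else false].
Definition xq v (k : 'I_(f v)) : cp_t f := @existT U (fun w => ('I_(f w) * bool)%type) v (k, false).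
Definition yq v (k : 'I_(f v)) : cp_t f := @existT U (fun w => ('I_(f w) * bool)%type) v (k, true).
Arguments xq : clear implicits.
Arguments yq : clear implicits.

Lemma card_alive1 S (j : CI) : #|[set i | (i == j) && alv S i]| <= alv S j.
Proof.
case: (boolP (alv S j)) => aj.
  apply: (@leq_trans #|[set j]|); last by rewrite cards1.
  apply: subset_leq_card; apply/subsetP=> i; rewrite !inE.
  by case/andP.
rewrite leqn0; apply/eqP; apply: eq_card0 => i; rewrite !inE.
by apply/negP=> /andP [/eqP -> ]; rewrite (negbTE aj).
Qed.

Lemma cnt_x S v (k : 'I_(f v)) : cnt' S (inr (xq v k)) <= 1 + alv S (inr (v, Some false)).
Proof.
rewrite /cnt; apply: (@leq_trans #|(inl (xq v k) : CI) |: [set i | (i == inr (v, Some false)) && alv S i]|); last first.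
  by rewrite cardsU1; apply: leq_add (leq_b1 _) (card_alive1 _ _).
apply: subset_leq_card; apply/subsetP=> i; rewrite !inE => /andP [ai].
case: i ai => [q|[w [bb|]]] //= ai.
  case/andP=> /eqP t i1; apply/orP; left; apply/eqP; congr inl.
  have nb : ~~ qb q by case/andP: ai.
  apply: cp_eq; rewrite /qidx /qb /=.
  - by move: t; rewrite /= => ->.
  - by move: i1; rewrite /qidx /qb /= eqb_id => /eqP ->.
  - by move: nb; rewrite /qb; case: (tagged q).2.
move=> /andP [/eqP t /eqP b]; rewrite ai andbT.
by move: t b; rewrite /qb /= => <- <-; rewrite eqxx.
Qed.

Lemma alive_AX S v : alv S (inr (v, Some false)) <= (1 < f v).
Proof. by case: (boolP (alv S _)) => // /andP [/= -> _]. Qed.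

Lemma cnt_y S v (k : 'I_(f v)) : (forall q, tag q = v -> ~~ qb q -> inr q \notin S) ->
  cnt' S (inr (yq v k)) <= alv S (inr (v, Some true)).
Proof.
move=> Hx; rewrite /cnt; apply: leq_trans (card_alive1 S _).
apply: subset_leq_card; apply/subsetP=> i; rewrite !inE => /andP [ai].
case: i ai => [q|[w [bb|]]] //= ai.
  case/andP=> /eqP t _.
  have nb : ~~ qb q by case/andP: ai.
  have : cmem (inl q) (inr q) by rewrite /= !eqxx nb.
  move=> /(alive_mem ai); by rewrite (negbTE (Hx q (esym t) nb)).
move=> /andP [/eqP t /eqP b]; rewrite ai andbT.
by move: t b; rewrite /qb /= => <- <-; rewrite eqxx.
Qed.

Lemma inr_eqE (q1 q2 : cp_t f) : (inr q1 == inr q2 :> T) = (q1 == q2).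
Proof. by apply/eqP/eqP=> [[]|->]. Qed.

Section Block.
Variables (v : U) (S0 : {set T}).
Hypothesis HS0 : forall q, inr q \in S0 -> tag q != v.
Hypothesis H0 : forall b, 1 < b -> peel cmem cuse S0 b.

Lemma Qs_rem_x (k : 'I_(f v)) t' : (S0 :|: Qs v k.+1 t') :\ inr (xq v k) = S0 :|: Qs v k t'.
Proof.
apply/setP => a; rewrite !inE; case: a => [e|q] //=.
case: (boolP (inr q \in S0)) => qS /=.
  by rewrite inr_eqE eq_cp /= (negbTE (HS0 qS)).
rewrite inr_eqE eq_cp /=; case: (tag q == v) => //=; rewrite /qidx /qb /=.
case: (tagged q).2 => //=; rewrite ?andbT ?andbF //.
by rewrite ltnS [X in _ = X]ltn_neqAle andbC.
Qed.

Lemma Qs_rem_y (k : 'I_(f v)) : (S0 :|: Qs v 0 k.+1) :\ inr (yq v k) = S0 :|: Qs v 0 k.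
Proof.
apply/setP => a; rewrite !inE; case: a => [e|q] //=.
case: (boolP (inr q \in S0)) => qS /=.
  by rewrite inr_eqE eq_cp /= (negbTE (HS0 qS)).
rewrite inr_eqE eq_cp /=; case: (tag q == v) => //=; rewrite /qidx /qb /=.
case: (tagged q).2 => //=; rewrite ?andbT ?andbF //.
by rewrite ltnS [X in _ = X]ltn_neqAle andbC.
Qed.

Lemma Qs00 : S0 :|: Qs v 0 0 = S0.
Proof.
apply/setP => a; rewrite !inE; case: a => [e|q] //=; rewrite ?orbF //.
by case: (qb q); rewrite andbF orbF.
Qed.

Lemma xq_in (k : 'I_(f v)) t' : inr (xq v k) \in S0 :|: Qs v k.+1 t'.
Proof. by rewrite !inE /qidx /qb /= eqxx ltnSn orbT. Qed.

Lemma yq_in (k : 'I_(f v)) : inr (yq v k) \in S0 :|: Qs v 0 k.+1.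
Proof. by rewrite !inE /qidx /qb /= eqxx ltnSn orbT. Qed.

Lemma AX_dead (fv : 0 < f v) t t' : t < f v ->
  ~~ alv (S0 :|: Qs v t t') (inr (v, Some false)).
Proof.
move=> lt; have tl : (f v).-1 < f v by rewrite ltn_predL.
pose top := Ordinal tl.
apply: (@alive_notin _ _ cmem cuse _ _ (inr (xq v top))).
  by rewrite /= /qb /= !eqxx.
rewrite !inE /qidx /qb /= eqxx negb_or /=; apply/andP; split.
  by apply/negP=> /HS0; rewrite /= eqxx.
by rewrite -leqNgt -ltnS prednK.
Qed.

Lemma AY_dead (fv : 0 < f v) t' : t' < f v ->
  ~~ alv (S0 :|: Qs v 0 t') (inr (v, Some true)).
Proof.
move=> lt; have tl : (f v).-1 < f v by rewrite ltn_predL.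
pose top := Ordinal tl.
apply: (@alive_notin _ _ cmem cuse _ _ (inr (yq v top))).
  by rewrite /= /qb /= !eqxx.
rewrite !inE /qidx /qb /= eqxx negb_or /=; apply/andP; split.
  by apply/negP=> /HS0; rewrite /= eqxx.
by rewrite -leqNgt -ltnS prednK.
Qed.

Lemma noX t' : forall q, tag q = v -> ~~ qb q -> inr q \notin S0 :|: Qs v 0 t'.
Proof.
move=> q tq nb; rewrite !inE negb_or; apply/andP; split.
  by apply/negP=> /HS0; rewrite tq eqxx.
by rewrite (negbTE nb) andbF.
Qed.

Lemma LB t' : t' < f v -> forall b, 2 <= b + t' -> peel cmem cuse (S0 :|: Qs v 0 t') b.
Proof.
elim: t' => [|t IH] lt b Hb; first by rewrite Qs00; apply: H0; rewrite addn0 in Hb.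
have fv : 0 < f v by apply: leq_ltn_trans lt.
pose k := Ordinal (ltnW lt : t < f v).
have c0 : cnt' (S0 :|: Qs v 0 k.+1) (inr (yq v k)) = 0.
  apply/eqP; rewrite -leqn0; apply: leq_trans (cnt_y _ (noX _)) _.
  by rewrite (negbTE (AY_dead fv lt)).
apply: (PeelS (yq_in k)); first by rewrite c0.
rewrite c0 subn0 Qs_rem_y; apply: IH; first exact: ltnW.
move: Hb; rewrite addnS addn1 addSn; exact.
Qed.

Lemma LBtop : 0 < f v -> forall b, 0 < b -> 2 <= b + (f v).-1 -> peel cmem cuse (S0 :|: Qs v 0 (f v)) b.
Proof.
move=> fv b b0 Hb; have tl : (f v).-1 < f v by rewrite ltn_predL.
pose top := Ordinal tl.
have E : f v = top.+1 by rewrite /= prednK.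
rewrite [X in Qs v 0 X]E.
have c1 : cnt' (S0 :|: Qs v 0 top.+1) (inr (yq v top)) <= 1.
  exact: leq_trans (cnt_y _ (noX _)) (leq_b1 _).
apply: (PeelS (yq_in top)); first exact: leq_trans c1 b0.
rewrite Qs_rem_y; move: (LB tl Hb) => H; apply: (peel_mono H).
move: c1; lia.
Qed.

Lemma LA : 0 < f v -> forall t, t < f v -> forall b, 0 < b -> 2 <= b + (f v).-1 ->
  peel cmem cuse (S0 :|: Qs v t (f v)) b.
Proof.
move=> fv; elim=> [|t IH] lt b b0 Hb; first exact: LBtop.
pose k := Ordinal (ltnW lt : t < f v).
have c1 : cnt' (S0 :|: Qs v k.+1 (f v)) (inr (xq v k)) <= 1.
  apply: leq_trans (cnt_x _ _) _; by rewrite (negbTE (AX_dead fv (f v) lt)).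
apply: (PeelS (xq_in k (f v))); first exact: leq_trans c1 b0.
rewrite Qs_rem_x; move: (IH (ltnW lt) b b0 Hb) => H; apply: (peel_mono H).
move: c1; lia.
Qed.

Lemma ar3 (b c m : nat) : 1 < b -> 0 < m -> c <= 1 + (1 < m) ->
  0 < b - c + 1 /\ 2 <= b - c + 1 + m.-1.
Proof. case: (ltnP 1 m) => /= H; lia. Qed.

Lemma LAtop : forall b, 1 < b -> peel cmem cuse (S0 :|: Qs v (f v) (f v)) b.
Proof.
move=> b b1; case: (posnP (f v)) => fv.
  by rewrite fv Qs00; apply: H0.
have tl : (f v).-1 < f v by rewrite ltn_predL.
pose top := Ordinal tl.
have E : f v = top.+1 by rewrite /= prednK.
rewrite [X in Qs v X _]E.
have c2 := leq_trans (cnt_x (S0 :|: Qs v top.+1 (f v)) top) (leq_add (leqnn 1) (alive_AX _ _)).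
have [h1 h2] := ar3 b1 fv c2.
apply: (PeelS (xq_in top (f v))); first by move: c2 b1; case: (1 < f v) => /=; lia.
rewrite Qs_rem_x; exact: LA fv _ tl _ h1 h2.
Qed.
End Block.

Definition Sl (l : seq U) : {set T} := [set a : T | if a is inr q then tag q \in l else true].

Lemma phase1 l : uniq l -> forall b, 1 < b -> peel cmem cuse (Sl l) b.
Proof.
elim: l => [|v l IH] /=.
  move=> _ b b1; apply: (@phase2 #|Sl [::]|) => //.
  - by case=> [e|q]; rewrite inE.
  - exact: ltnW.
  - have -> : remE (Sl [::]) = 0.
      apply: eq_card0 => e; by rewrite !inE.
    by rewrite addn0; apply: leq_trans b1 (leq_addr _ _).
case/andP=> vl ul b b1.
have HS0 : forall q, inr q \in Sl l -> tag q != v.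
  move=> q; rewrite inE => tl; by apply: contra vl => /eqP <-.
have -> : Sl (v :: l) = Sl l :|: Qs v (f v) (f v).
  apply/setP=> a; rewrite !inE; case: a => [e|q] //=; rewrite in_cons orbC.
  case: eqP => //= tv; have := qidx_lt q; rewrite tv => ->; by case: (qb q).
exact: LAtop HS0 (IH ul) b b1.
Qed.

Lemma gl_peel : peel cmem cuse [set: T] 2.
Proof.
have -> : [set: T] = Sl (enum U).
  by apply/setP=> a; rewrite !inE; case: a => [e|q] //; rewrite mem_enum.
by apply: phase1; rewrite ?enum_uniq.
Qed.
End GL.

Unset Implicit Arguments.
Theorem theorem1p2 (G : sgraph) :
  is_gen_line_graph G -> competition_number G <= 2.
Proof.
case=> U [h [f [_ _ [phi [bij Hg]]]]].
apply: cn_le2; apply: (transfer bij Hg).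
exact: (repr_of_peel (@gl_irr U h f) (@gl_cl U h f) (@gl_cov U h f) (gl_peel h f)).
Qed.
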